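(* Assume (C0), (C1), (C2). Then, as $k\to\infty$ over $\mathbb{N}_{odd}$, $$\|\Phi_k\|_{L^2(0,\infty)}=O(1),\qquad \|\Phi_k'\|_{L^2(0,\infty)}=O(k),\qquad \|\Phi_k'\|_{L^\infty(0,\infty)}=O(k^{3/2}).$$ In particular $|\Phi_k'(0)|=O(k^{3/2})$.
   Context: Let $\omega>0$; $\mathbb{N}_{odd}$ is the set of positive odd integers. (C0): $g\in L^\infty(\mathbb{R})$ even, $g\not\equiv0$, $h=\gamma\delta_0$ with $\gamma\in\mathbb{R}\setminus\{0\}$. For $k\in\mathbb{N}_{odd}$, $L_k=-\frac{d^2}{dx^2}-k^2\omega^2g$ on $L^2(\mathbb{R})$ with domain $H^2(\mathbb{R})$; $\sigma_D(L_k)$ is the spectrum of $L_k$ restricted to $\{\varphi\in H^2(\mathbb{R}):\varphi(0)=0\}$. (C1): for all $k\in\mathbb{N}_{odd}$, $0\notin\sigma_{ess}(L_k)\cup\sigma_D(L_k)$. Under (C0),(C1) fix for each $k\in\mathbb{N}_{odd}$ a function $\Phi_k\in H^2(0,\infty)$ with $L_k\Phi_k=0$ on $(0,\infty)$ and $\Phi_k(0)=1$. (C2): there exist $\rho,M>0$ with $|\Phi_k(x)|\le Me^{-\rho x}$ for $x\ge0$, $k\in\mathbb{N}_{odd}$. *)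

(* Defs.v *)
From HB Require Import structures.
From mathcomp Require Import all_boot all_order all_algebra.
From mathcomp Require Import all_classical all_reals all_analysis.
Set Implicit Arguments. Unset Strict Implicit. Unset Printing Implicit Defensive.
Import Order.TTheory GRing.Theory Num.Theory.
Local Open Scope classical_set_scope.
Local Open Scope ring_scope.

Section Defs.
Variable R : realType.
Local Notation mu := (@lebesgue_measure R).

Definition L2 (D : set R) (f : R -> R) : Prop :=
  measurable_fun D f /\ (\int[mu]_(x in D) ((f x) ^+ 2)%:E < +oo)%E.

Definition L2norm (D : set R) (f : R -> R) : \bar R :=
  ((\int[mu]_(x in D) ((f x) ^+ 2)%:E) `^ (2^-1))%E.

Definition oint (a b : R) (u : R -> R) : R :=
  if a <= b then \int[mu]_(t in `[a, b]) u t else - \int[mu]_(t in `[b, a]) u t.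

(* f in H^2(R) with (continuous representatives of) weak derivatives u = f', v = f'' *)
Definition H2R (f u v : R -> R) : Prop :=
  [/\ L2 setT f, L2 setT u, L2 setT v,
      forall x, f x = f 0 + oint 0 x u &
      forall x, u x = u 0 + oint 0 x v].

(* f in H^2(0,oo) (restricted to [0,oo)) with weak derivatives u = f', v = f'' ;
   values at 0 are those of the continuous extensions *)
Definition H2half (f u v : R -> R) : Prop :=
  [/\ L2 `]0, +oo[ f, L2 `]0, +oo[ u, L2 `]0, +oo[ v,
      forall x, 0 <= x -> f x = f 0 + oint 0 x u &
      forall x, 0 <= x -> u x = u 0 + oint 0 x v].

(* Domain of the Dirichlet realization at 0: f in L^2(R), f in H^2 on each of
   (-oo,0) and (0,oo), f(0-) = f(0+) = 0 (u = f' may jump at 0). *)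
Definition DirDom (f u v : R -> R) : Prop :=
  [/\ L2 setT f /\ L2 setT u /\ L2 setT v, f 0 = 0,
      forall x, f x = oint 0 x u,
      forall x, 0 <= x -> u x = u 0 + oint 0 x v &
      exists c, forall x, x < 0 -> u x = c + oint 0 x v].

Definition Lk (omega : R) (g : R -> R) (k : nat) (f v : R -> R) : R -> R :=
  fun x => - v x - (k%:R) ^+ 2 * omega ^+ 2 * g x * f x.

(* 0 in the essential spectrum of L_k (operator on L^2(R) with domain H^2(R)),
   via Weyl's criterion: a singular Weyl sequence exists. *)
Definition zero_in_ess (omega : R) (g : R -> R) (k : nat) : Prop :=
  exists f u v : nat -> R -> R,
    [/\ forall n, H2R (f n) (u n) (v n),
        forall n, \int[mu]_x ((f n x) ^+ 2) = 1,
        forall phi, L2 setT phi ->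
          (fun n => \int[mu]_x (f n x * phi x)) @ \oo --> 0 &
        (fun n => \int[mu]_x ((Lk omega g k (f n) (v n) x) ^+ 2)) @ \oo --> 0].

(* 0 in the Dirichlet spectrum: L_k on the Dirichlet domain is not a bijection
   onto L^2(R) (modulo a.e. equality). *)
Definition zero_in_dir (omega : R) (g : R -> R) (k : nat) : Prop :=
  ~ ( (forall f u v, DirDom f u v ->
         {ae mu, forall x, Lk omega g k f v x = 0} -> {ae mu, forall x, f x = 0})
    /\ (forall w, L2 setT w -> exists f u v, DirDom f u v /\
         {ae mu, forall x, Lk omega g k f v x = w x}) ).

End Defs.

(* Main.v *)
Require Import Defs.
From HB Require Import structures.
From mathcomp Require Import all_boot all_order all_algebra.
From mathcomp Require Import all_classical all_reals all_analysis.
From mathcomp Require Import measurable_realfun.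
From mathcomp Require Import lra ring.
Import Order.TTheory GRing.Theory Num.Theory.
Local Open Scope classical_set_scope.
Local Open Scope ring_scope.

Section H.
Context {R : realType}.
Local Notation mu := (@lebesgue_measure R).

Lemma int_exp (r A : R) : 0 < r -> 0 <= A ->
  (\int[mu]_(x in `]0%R, +oo[) (A * expR (- r * x))%:E <= (A / r)%:E)%E.
Proof.
move=> r0 A0.
have -> : (\int[mu]_(x in `]0%R, +oo[) (A * expR (- r * x))%:E =
   \int[mu]_(x in `]0%R, +oo[) ((A / r)%:E * (exponential_pdf r x)%:E))%E.
  apply: eq_integral => x; rewrite inE /= in_itv /= andbT => x0.
  rewrite exponential_pdfE ?(ltW x0) // -EFinM; congr EFin.
  by rewrite mulrA divfK // gt_eqF.
apply: (@le_trans _ _ (\int[mu]_(x in setT) (((A / r)%:E * (exponential_pdf r x)%:E)%E))%E).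
  apply: ge0_subset_integral => //=.
  - apply: measurable_funeM; apply/measurable_EFinP.
    first [exact: measurable_exponential_pdf (ltW r0) | exact: measurable_exponential_pdf].
  - move=> x _; rewrite -EFinM lee_fin.
    exact: mulr_ge0 (divr_ge0 A0 (ltW r0)) (exponential_pdf_ge0 (ltW r0) x).
rewrite (@ge0_integralZl_EFin _ _ _ mu setT measurableT (fun x => (exponential_pdf r x)%:E)).
- by rewrite integral_exponential_pdf // mule1.
- by move=> x _; rewrite lee_fin exponential_pdf_ge0 ?ltW.
- apply/measurable_EFinP.
  first [exact: measurable_exponential_pdf (ltW r0) | exact: measurable_exponential_pdf].
- exact: divr_ge0 A0 (ltW r0).
Qed.


Lemma ae_neq0 : {ae mu, forall t : R, t != 0}.
Proof.
exists [set 0]; split => //; first by rewrite lebesgue_measure_set1.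
by move=> t /= /negP; rewrite negbK => /eqP.
Qed.

Lemma meas_0oo (w : R -> R) : measurable_fun (`]0%R, +oo[ : set R) w ->
  measurable_fun (`[0%R, +oo[ : set R) w.
Proof.
move=> mw.
have -> : (`[0%R, +oo[%classic : set R) = [set 0%R] `|` `]0%R, +oo[%classic.
  apply/seteqP; split => t /=; rewrite !in_itv /= !andbT.
    by rewrite le_eqVlt => /predU1P[<-|->]; [left|right].
  by case=> [->//|/ltW].
by apply/measurable_funU => //; split => //; exact: measurable_fun_set1.
Qed.

Lemma mu_cc (a b : R) : a <= b -> mu (`[a, b] : set R) = (b - a)%:E.
Proof.
move=> ab; rewrite lebesgue_measure_itv /= lte_fin.
case: (ltP a b) => [_|ba]; first by rewrite EFinB.
have -> : b = a by apply/eqP; rewrite eq_le ab ba.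
by rewrite subrr.
Qed.

Lemma int_bnd (a b c : R) (w : R -> R) : a <= b -> 0 <= c ->
  measurable_fun (`[a, b] : set R) w ->
  {ae mu, forall x, (`[a, b]%classic : set R) x -> `|w x| <= c} ->
  mu.-integrable `[a, b] (EFin \o w) /\
  `|\int[mu]_(x in `[a, b]) w x| <= c * (b - a).
Proof.
move=> ab c0 mw hw.
have le : (\int[mu]_(x in `[a, b]) `|(w x)%:E| <= (c * (b - a))%:E)%E.
  apply: (@le_trans _ _ (\int[mu]_(x in `[a, b]) (cst c%:E) x)%E).
    apply: ae_ge0_le_integral => //.
    all: first [ by apply: measurableT_comp => //; apply/measurable_EFinP
               | by move=> x _; rewrite /= lee_fin
               | by apply: filterS hw => x h /h; rewrite /= lee_fin | idtac ].
  rewrite integral_cst //; set m := (X in (_ * X)%E).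
  have -> : m = (b - a)%:E by exact: mu_cc ab.
  by rewrite -EFinM.
have iw : mu.-integrable `[a, b] (EFin \o w).
  apply/integrableP; split; first by apply/measurable_EFinP.
  by apply: le_lt_trans le _; rewrite ltry.
split => //.
apply: le_trans (le_normr_Rintegral _ _) _ => //.
rewrite /Rintegral.
have fin : (\int[mu]_(x in `[a, b]) (`|w x|)%:E \is a fin_num)%E.
  rewrite ge0_fin_numE; last by apply: integral_ge0 => x _; rewrite lee_fin.
  by apply: le_lt_trans le _; rewrite ltry.
by rewrite -lee_fin fineK.
Qed.

Lemma split_int (a b c : R) (w : R -> R) : a <= b -> b <= c ->
  mu.-integrable `[a, c] (EFin \o w) ->
  \int[mu]_(x in `[a, c]) w x - \int[mu]_(x in `[a, b]) w x =
  \int[mu]_(x in `[b, c]) w x.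
Proof.
move=> ab bc iw.
rewrite (@Rintegral_itvB _ w (BLeft a) (BRight c) b) ?bnd_simp //.
rewrite Rintegral_itv_obnd_cbnd //.
by apply: integrableS iw => //; apply: subset_itvr; rewrite bnd_simp.
Qed.


Lemma deriv_bound (f u v : R -> R) (M Kc rho h x : R) :
  (forall t, 0 <= t -> f t = f 0 + oint 0 t u) ->
  (forall t, 0 <= t -> u t = u 0 + oint 0 t v) ->
  measurable_fun (`[0%R, +oo[ : set R) u ->
  measurable_fun (`[0%R, +oo[ : set R) v ->
  (forall t, 0 <= t -> `|f t| <= M * expR (- rho * t)) ->
  {ae mu, forall t, 0 < t -> `|v t| <= Kc * `|f t|} ->
  0 <= M -> 0 <= Kc -> 0 <= rho -> 0 < h -> 0 <= x ->
  h * `|u x| <= 2 * (M * expR (- rho * x)) + Kc * (M * expR (- rho * x)) * h ^+ 2.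
Proof.
move=> hf hu mu0 mv0 hfb hv M0 Kc0 rho0 h0 x0.
have Eb a t : 0 <= a -> a <= t -> `|f t| <= M * expR (- rho * a).
  move=> a0 at_; apply: le_trans (hfb t (le_trans a0 at_)) _.
  by apply: ler_wpM2l => //; rewrite ler_expR; nra.
have E0 a : 0 <= M * expR (- rho * a) by rewrite mulr_ge0 ?expR_ge0.
have mvS a y : 0 <= a -> measurable_fun (`[a, y] : set R) v.
  move=> a0; apply: measurable_funS mv0 => //.
  by move=> t /=; rewrite !in_itv /= => /andP[at_ _]; rewrite (le_trans a0 at_).
have muS a y : 0 <= a -> measurable_fun (`[a, y] : set R) u.
  move=> a0; apply: measurable_funS mu0 => //.
  by move=> t /=; rewrite !in_itv /= => /andP[at_ _]; rewrite (le_trans a0 at_).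
have vae a y : 0 <= a ->
    {ae mu, forall t, (`[a, y]%classic : set R) t -> `|v t| <= Kc * (M * expR (- rho * a))}.
  move=> a0; have FF : Filter (almost_everywhere mu) by exact: ae_filter_ringOfSetsType.
  refine (filterS2 FF _ hv ae_neq0).
  move=> t h1 h2 /=; rewrite in_itv /= => /andP[at_ _].
  apply: le_trans (h1 _) _; first by rewrite lt_neqAle eq_sym h2 (le_trans a0 at_).
  by apply: ler_wpM2l => //; exact: Eb.
have intv a y : 0 <= a -> a <= y ->
    mu.-integrable `[a, y] (EFin \o v) /\
    `|\int[mu]_(t in `[a, y]) v t| <= Kc * (M * expR (- rho * a)) * (y - a).
  move=> a0 ay; apply: int_bnd => //; first exact: mulr_ge0.
  + exact: mvS.
  + exact: vae.
have ueq t : x <= t -> u t - u x = \int[mu]_(s in `[x, t]) v s.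
  move=> xt; have t0 := le_trans x0 xt.
  rewrite (hu t t0) (hu x x0) /oint t0 x0 opprD addrACA subrr add0r.
  by apply: split_int => //; case: (intv 0 t).
have ubnd t : (`[x, x + h]%classic : set R) t -> `|u t - u x| <= Kc * (M * expR (- rho * x)) * h.
  rewrite /= in_itv /= => /andP[xt th]; rewrite ueq //.
  case: (intv x t x0 xt) => _ /le_trans; apply.
  by apply: ler_wpM2l; [exact: mulr_ge0|lra].
have uint y : 0 <= y -> mu.-integrable `[0, y] (EFin \o u).
  move=> y0.
  have [] := @int_bnd 0 y (`|u 0| + Kc * (M * expR (- rho * 0)) * y) u y0 _ (muS 0 y (lexx 0)) _ => //.
    by rewrite addr_ge0 // mulr_ge0 // mulr_ge0.
  apply: aeW => t /=; rewrite in_itv /= => /andP[t0 ty].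
  rewrite (hu t t0) /oint t0; apply: le_trans (ler_normD _ _) _; rewrite lerD2l.
  case: (intv 0 t (lexx 0) t0) => _ /le_trans; apply.
  by rewrite subr0; apply: ler_wpM2l => //; exact: mulr_ge0.
have xh : x <= x + h by lra.
have xh0 : 0 <= x + h by lra.
have iux : mu.-integrable `[x, x + h] (EFin \o u).
  by apply: integrableS (uint (x + h) xh0) => //; apply: subset_itvr; rewrite bnd_simp.
have feq : f (x + h) - f x = \int[mu]_(s in `[x, x + h]) u s.
  rewrite (hf (x + h) xh0) (hf x x0) /oint xh0 x0 opprD addrACA subrr add0r.
  by apply: split_int => //; exact: uint.
have icst : mu.-integrable `[x, x + h] (EFin \o (fun _ : R => u x)).
  have [] := @int_bnd x (x + h) `|u x| (fun _ => u x) xh (normr_ge0 _) _ _ => //.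
  by apply: aeW.
have aeu : {ae mu, forall t, (`[x, x + h]%classic : set R) t ->
    `|u t - u x| <= Kc * (M * expR (- rho * x)) * h} by apply: aeW.
have [_ wbnd] := @int_bnd x (x + h) (Kc * (M * expR (- rho * x)) * h) (fun s => u s - u x) xh
   (mulr_ge0 (mulr_ge0 Kc0 (E0 x)) (ltW h0))
   (measurable_funB (muS x (x + h) x0) (measurable_cst _)) aeu.
have spl : \int[mu]_(s in `[x, x + h]) (u s - u x) = \int[mu]_(s in `[x, x + h]) u s - u x * h.
  rewrite RintegralB // Rintegral_cst //; set m := (X in _ * fine X).
  have -> : m = ((x + h) - x)%:E by exact: mu_cc xh.
  by have -> : x + h - x = h by lra.
have key : u x * h = (f (x + h) - f x) - \int[mu]_(s in `[x, x + h]) (u s - u x).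
  by rewrite spl feq opprB addrC subrK.
have hxh : x + h - x = h by lra.
rewrite hxh in wbnd.
have : `|u x * h| <= `|f (x + h)| + `|f x| + `|\int[mu]_(s in `[x, x + h]) (u s - u x)|.
  by rewrite key; apply: le_trans (ler_normB _ _) _; rewrite lerD2r ler_normB.
rewrite normrM (gtr0_norm h0) mulrC.
have := Eb x (x + h) x0 xh; have := Eb x x x0 (lexx x).
set A := `|f (x + h)|; set B := `|f x|; set C := `|\int[mu]_(s in `[x, x + h]) (u s - u x)|.
set E := M * expR (- rho * x); set D := h * `|u x|.
move: wbnd; rewrite -/C -/E expr2 mulrA.
set F := Kc * E * h * h.
lra.
Qed.


Lemma L2_bound (w : R -> R) (A rho : R) : 0 < rho -> 0 <= A ->
  measurable_fun (`]0%R, +oo[ : set R) w ->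
  (forall x, 0 < x -> `|w x| <= A * expR (- rho * x)) ->
  (L2norm (`]0%R, +oo[%classic : set R) w <= (A * Num.sqrt ((2 * rho)^-1))%:E)%E.
Proof.
move=> rho0 A0 mw hw.
have r0 : 0 < 2 * rho by rewrite mulr_gt0.
have le1 : (\int[mu]_(x in `]0%R, +oo[) ((w x) ^+ 2)%:E <=
            \int[mu]_(x in `]0%R, +oo[) (A ^+ 2 * expR (- (2 * rho) * x))%:E)%E.
  apply: ge0_le_integral => //.
  - by move=> x _; rewrite lee_fin sqr_ge0.
  - by apply/measurable_EFinP; apply: measurable_funX.
  - apply/measurable_EFinP; apply: measurable_funM => //.
    apply: measurableT_comp => //.
    all: try exact: measurable_expR.
    all: try by apply: measurable_funM.
  - move=> x; rewrite /= in_itv /= andbT => x0; rewrite lee_fin.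
    have -> : - (2 * rho) * x = - rho * x + - rho * x by ring.
    rewrite expRD mulrA -real_normK ?num_real //.
    have -> : A ^+ 2 * expR (- rho * x) * expR (- rho * x) =
              (A * expR (- rho * x)) ^+ 2 by ring.
    by rewrite !expr2; apply: ler_pM => //; exact: hw.
have le2 := le_trans le1 (int_exp (2 * rho) (A ^+ 2) r0 (sqr_ge0 A)).
have e : (((A ^+ 2 / (2 * rho))%:E) `^ 2^-1 = (A * Num.sqrt ((2 * rho)^-1))%:E)%E.
  rewrite poweR_EFin powR12_sqrt; last by rewrite divr_ge0 ?sqr_ge0 // ltW.
  by rewrite sqrtrM ?sqr_ge0 // sqrtr_sqr ger0_norm.
rewrite /L2norm -e.
apply: (gt0_ler_poweR (r := 2^-1)) le2.
- by rewrite invr_ge0.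
- by rewrite in_itv /= leey andbT integral_ge0 // => x _; rewrite lee_fin sqr_ge0.
- by rewrite in_itv /= leey andbT lee_fin divr_ge0 ?sqr_ge0 // ltW.
Qed.

End H.

Theorem lemma2p3 (R : realType) (omega : R) (g : R -> R) (gamma : R)
    (Phi dPhi d2Phi : nat -> R -> R) :
  0 < omega ->
  (* (C0): g in L^oo(R), even, not identically 0; h = gamma delta_0, gamma <> 0 *)
  measurable_fun setT g ->
  (exists B : R, {ae @lebesgue_measure R, forall x, `|g x| <= B}) ->
  {ae @lebesgue_measure R, forall x, g (- x) = g x} ->
  ~ {ae @lebesgue_measure R, forall x, g x = 0} ->
  gamma != 0 ->
  (* (C1): 0 is neither in sigma_ess(L_k) nor in sigma_D(L_k), k odd *)
  (forall k, odd k -> ~ zero_in_ess omega g k /\ ~ zero_in_dir omega g k) ->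
  (* Phi_k in H^2(0,oo) (weak derivatives dPhi k, d2Phi k), L_k Phi_k = 0 on (0,oo), Phi_k(0) = 1 *)
  (forall k, odd k ->
     [/\ H2half (Phi k) (dPhi k) (d2Phi k), Phi k 0 = 1 &
         {ae @lebesgue_measure R, forall x, 0 < x -> Lk omega g k (Phi k) (d2Phi k) x = 0}]) ->
  (* (C2) *)
  (exists rho M : R, [/\ 0 < rho, 0 < M &
     forall k, odd k -> forall x, 0 <= x -> `|Phi k x| <= M * expR (- rho * x)]) ->
  exists C : R, exists K0 : nat, forall k, odd k -> (K0 <= k)%N ->
    [/\ (L2norm (`]0%R, +oo[%classic : set R) (Phi k) <= C%:E)%E,
        (L2norm (`]0%R, +oo[%classic : set R) (dPhi k) <= (C * k%:R)%:E)%E,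
        (forall x, 0 < x -> `|dPhi k x| <= C * (k%:R `^ (3 / 2))) &
        `|dPhi k 0| <= C * (k%:R `^ (3 / 2))].
Proof.
move=> om0 mg [B hB] _ _ _ _ hPhi [rho [M [rho0 M0 hM]]].
pose Bp := `|B|.
have Bp0 : 0 <= Bp by rewrite normr_ge0.
pose Cu := M * (2 + omega ^+ 2 * Bp).
have Cu0 : 0 <= Cu.
  apply: mulr_ge0; first exact: ltW.
  by apply: addr_ge0 => //; apply: mulr_ge0 => //; exact: sqr_ge0.
pose s := Num.sqrt ((2 * rho)^-1).
have s0 : 0 <= s by rewrite sqrtr_ge0.
have Ms0 : 0 <= M * s by apply: mulr_ge0 => //; exact: ltW.
have Cus0 : 0 <= Cu * s by rewrite mulr_ge0.
exists (M * s + Cu * s + Cu), 0%N => k kodd _.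
have [[[mf _] [mu' _] [mv _] hf hu] f0 hL] := hPhi k kodd.
have kpos : 0 < (k%:R : R) by rewrite ltr0n odd_gt0.
pose Kc := (k%:R : R) ^+ 2 * omega ^+ 2 * Bp.
have Kc0 : 0 <= Kc.
  by apply: mulr_ge0 => //; apply: mulr_ge0; exact: sqr_ge0.
have FF : Filter (almost_everywhere (@lebesgue_measure R)) by exact: ae_filter_ringOfSetsType.
have hv : {ae @lebesgue_measure R, forall t, 0 < t -> `|d2Phi k t| <= Kc * `|Phi k t|}.
  refine (filterS2 FF _ hL hB) => t h1 h2 t0.
  have := h1 t0; rewrite /Lk => e.
  have -> : d2Phi k t = - ((k%:R : R) ^+ 2 * omega ^+ 2 * g t * Phi k t).
    by apply/eqP; rewrite -subr_eq0 opprK -oppr_eq0 opprD e.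
  rewrite normrN normrM [X in X * _]normrM [X in X * _ * _]normrM.
  rewrite ger0_norm; last by rewrite mulr_ge0 // sqr_ge0.
  rewrite [`|omega ^+ 2|]ger0_norm; last exact: sqr_ge0.
  rewrite /Kc; apply: ler_wpM2r => //.
  apply: ler_wpM2l; first by apply: mulr_ge0; exact: sqr_ge0.
  exact: le_trans h2 (ler_norm _).
have pb x : 0 <= x -> `|dPhi k x| <= Cu * k%:R * expR (- rho * x).
  move=> x0.
  have ki : 0 < (k%:R : R)^-1 by rewrite invr_gt0.
  have H := @deriv_bound R (Phi k) (dPhi k) (d2Phi k) M Kc rho (k%:R^-1) x hf hu
    (meas_0oo _ mu') (meas_0oo _ mv) (fun t t0 => hM k kodd t t0) hv (ltW M0) Kc0 (ltW rho0)
    ki x0.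
  have e : `|dPhi k x| = k%:R * (k%:R^-1 * `|dPhi k x|).
    by rewrite mulrA divff ?mul1r // gt_eqF.
  rewrite e; apply: le_trans (ler_wpM2l (ltW kpos) H) _.
  rewrite le_eqVlt; apply/orP; left; apply/eqP; rewrite /Cu /Kc.
  by field; rewrite gt_eqF.
have k1 : 1 <= (k%:R : R) by rewrite ler1n odd_gt0.
have k32 : (k%:R : R) <= k%:R `^ (3 / 2).
  by apply: le1r_powR => //; lra.
have sup x : 0 <= x -> `|dPhi k x| <= (M * s + Cu * s + Cu) * (k%:R `^ (3 / 2)).
  move=> x0; apply: le_trans (pb x x0) _.
  have e1 : expR (- rho * x) <= 1 by rewrite expR_le1; nra.
  apply: (@le_trans _ _ (Cu * k%:R)).
    by rewrite -[X in _ <= X]mulr1; apply: ler_wpM2l => //; rewrite mulr_ge0 // ltW.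
  apply: ler_pM; [exact: Cu0|exact: ltW kpos|lra|exact: k32].
split.
- apply: le_trans (@L2_bound R (Phi k) M rho rho0 (ltW M0) mf _) _.
    by move=> x x0; apply: hM => //; exact: ltW.
  rewrite lee_fin -/s; lra.
- apply: le_trans (@L2_bound R (dPhi k) (Cu * k%:R) rho rho0 _ mu' _) _.
  + by rewrite mulr_ge0 // ltW.
  + by move=> x x0; apply: pb; exact: ltW.
  rewrite lee_fin -/s mulrAC; apply: ler_wpM2r; first exact: ltW.
  lra.
- by move=> x x0; apply: sup; exact: ltW.
- exact: sup.
Qed.
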